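(* Let $X_1,X_2$ be finite CW-complexes, let $\phi:X_1\to X_2$ be a homotopy equivalence, let $\xi_2\in H^1(X_2;\mathbb{R})$ and $\xi_1=\phi^*(\xi_2)\in H^1(X_1;\mathbb{R})$. Then $\mathrm{cat}(X_1,\xi_1)=\mathrm{cat}(X_2,\xi_2)$.
   Context: Continuous closed 1-forms on a space $X$: a collection $\{f_U\}_{U\in\mathcal U}$ of continuous functions $f_U:U\to\mathbb{R}$ on the sets of an open cover $\mathcal U$ of $X$ such that each $f_U-f_V$ is locally constant on $U\cap V$. For a path $\gamma:[0,1]\to X$, $\int_\gamma\omega=\sum_{i}[f_{U_i}(\gamma(t_{i+1}))-f_{U_i}(\gamma(t_i))]$ for a subdivision $0=t_0<\dots<t_N=1$ with $\gamma[t_i,t_{i+1}]\subset U_i\in\mathcal U$. Each such form has a cohomology class in $H^1(X;\mathbb{R})$ given by its periods on loops, and every class of a finite CW-complex is realized. For a finite CW-complex $X$ and $\xi\in H^1(X;\mathbb{R})$, fix a continuous closed 1-form $\omega$ representing $\xi$. $\mathrm{cat}(X,\xi)$ is the least integer $k\ge0$ such that for every integer $N>0$ there is an open cover $X=F\cup F_1\cup\dots\cup F_k$ with: (a) each inclusion $F_j\to X$, $j=1,\dots,k$, is null-homotopic; (b) there is a homotopy $h_t:F\to X$, $t\in[0,1]$, with $h_0$ the inclusion and $\int_{\gamma_x}\omega\le -N$ for all $x\in F$, where $\gamma_x(t)=h_t(x)$. It is independent of the choice of $\omega$ in the class $\xi$. *)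

(* Defs.v *)
From HB Require Import structures.
From mathcomp Require Import all_boot all_order all_algebra.
From mathcomp Require Import all_classical all_reals all_analysis.
Set Implicit Arguments. Unset Strict Implicit. Unset Printing Implicit Defensive.
Import Order.TTheory GRing.Theory Num.Theory.
Import numFieldNormedType.Exports.
Local Open Scope classical_set_scope.
Local Open Scope ring_scope.

Section Defs.
Variable R : realType.

Definition unitI : set R := [set t | 0 <= t <= 1].

Definition sqnorm n (v : 'rV[R]_n) : R := \sum_(i < n) (v ord0 i) ^+ 2.
Definition disk n : set 'rV[R]_n := [set v | sqnorm v <= 1].
Definition odisk n : set 'rV[R]_n := [set v | sqnorm v < 1].
Definition sphere n : set 'rV[R]_n := [set v | sqnorm v = 1].

Definition finite_CW_structure (X : topologicalType) (k : nat)
    (dim : 'I_k -> nat) (Phi : forall i : 'I_k, 'rV[R]_(dim i) -> X) : Prop :=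
  let ocell i := Phi i @` @odisk (dim i) in
  hausdorff_space X /\
  [/\
      (forall i, {within @disk (dim i), continuous (Phi i)}),
      (* restricted to the open disk, Phi i is a homeomorphism onto the open cell *)
      (forall i, forall u v, @odisk (dim i) u -> @odisk (dim i) v ->
         Phi i u = Phi i v -> u = v) &
      (forall i (U : set 'rV[R]_(dim i)), open U ->
         exists V : set X, open V /\
           Phi i @` (U `&` @odisk (dim i)) = V `&` ocell i)] /\
  [/\
      (forall x : X, exists i, ocell i x /\ forall j, ocell j x -> j = i),
      (forall i v, @sphere (dim i) v ->
         exists j, (dim j < dim i)%N /\ ocell j (Phi i v)) &
      (forall A : set X,
         (forall i, closed (@disk (dim i) `&` Phi i @^-1` A)) -> closed A)].

Definition finite_CW_complex (X : topologicalType) : Prop :=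
  exists k (dim : 'I_k -> nat) (Phi : forall i : 'I_k, 'rV[R]_(dim i) -> X),
    @finite_CW_structure X k dim Phi.

Definition homotopic (X Y : topologicalType) (f g : X -> Y) : Prop :=
  exists H : X -> R -> Y,
    [/\ {within [set p : X * R | unitI p.2], continuous (fun p => H p.1 p.2)},
        (forall x, H x 0 = f x) & (forall x, H x 1 = g x)].

Definition homotopy_equivalence (X Y : topologicalType) (phi : X -> Y) : Prop :=
  continuous phi /\
  exists psi : Y -> X, [/\ continuous psi,
    homotopic (psi \o phi) id & homotopic (phi \o psi) id].

(** Continuous closed 1-forms: functions f_U on the sets U of an open cover,
    with f_U - f_V locally constant on U /\ V. *)
Record closed_form (X : topologicalType) := ClosedForm {
  cf_idx : Type;
  cf_U : cf_idx -> set X;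
  cf_f : cf_idx -> X -> R;
  cf_open : forall a, open (cf_U a);
  cf_cover : forall x, exists a, cf_U a x;
  cf_cont : forall a, {within cf_U a, continuous (cf_f a)};
  cf_locconst : forall a b x, cf_U a x -> cf_U b x ->
    exists N : set X, nbhs x N /\
      forall y, N y -> cf_U a y -> cf_U b y ->
        cf_f a y - cf_f b y = cf_f a x - cf_f b x
}.
Arguments cf_U {X} c _.
Arguments cf_f {X} c _ _.

(** [v] is the value of the integral of [w] along the path [g : [0,1] -> X]
    computed with some admissible subdivision 0 = t_0 < ... < t_N = 1. *)
Definition integral_value (X : topologicalType) (w : closed_form X)
    (g : R -> X) (v : R) : Prop :=
  exists (N : nat) (t : nat -> R) (a : nat -> cf_idx w),
    [/\ t 0%N = 0, t N = 1,
        (forall j, (j < N)%N -> t j < t j.+1),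
        (forall j, (j < N)%N -> forall s, t j <= s <= t j.+1 ->
           cf_U w (a j) (g s)) &
        v = \sum_(j < N) (cf_f w (a j) (g (t j.+1)) - cf_f w (a j) (g (t j)))].

(** the integral of w along g (well defined for continuous paths) *)
Definition path_integral (X : topologicalType) (w : closed_form X)
    (g : R -> X) : R := xget 0 [set v | integral_value w g v].

Definition is_path (X : topologicalType) (g : R -> X) : Prop :=
  {within unitI, continuous g}.

Definition is_loop (X : topologicalType) (g : R -> X) : Prop :=
  is_path g /\ g 0 = g 1.

(** the condition defining cat(X, xi) <= k, for w representing xi *)
Definition cat_cover_prop (X : topologicalType) (w : closed_form X) (k : nat)
  : Prop :=
  forall N : nat, (0 < N)%N ->
    exists (F : set X) (Fs : 'I_k -> set X),
      [/\ open F, (forall j, open (Fs j)),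
          (forall x, F x \/ exists j, Fs j x),
          (* (a) each inclusion F_j -> X is null-homotopic *)
          (forall j, exists (H : X -> R -> X) (c : X),
             [/\ {within [set p : X * R | Fs j p.1 /\ unitI p.2],
                   continuous (fun p => H p.1 p.2)},
                 (forall x, Fs j x -> H x 0 = x) &
                 (forall x, Fs j x -> H x 1 = c)]) &
          (exists h : X -> R -> X,
             [/\ {within [set p : X * R | F p.1 /\ unitI p.2],
                   continuous (fun p => h p.1 p.2)},
                 (forall x, F x -> h x 0 = x) &
                 (forall x, F x -> path_integral w (h x) <= - N%:R)])].

(** cat(X, xi) computed from a representative w of xi: least such k *)
Definition cat_xi (X : topologicalType) (w : closed_form X) : nat :=
  xget 0%N [set k | cat_cover_prop w k /\
                    forall m, cat_cover_prop w m -> (k <= m)%N].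

End Defs.

(* Main.v *)
Require Import Defs.
From HB Require Import structures.
From mathcomp Require Import all_boot all_order all_algebra.
From mathcomp Require Import all_classical all_reals all_analysis.
From mathcomp Require Import ring lra.
Import Order.TTheory GRing.Theory Num.Theory.
Import numFieldNormedType.Exports.
Local Open Scope classical_set_scope.
Local Open Scope ring_scope.
Set Implicit Arguments. Unset Strict Implicit. Unset Printing Implicit Defensive.

Definition wcont (T U : topologicalType) (A : set T) (f : T -> U) :=
  forall x, A x -> forall W, nbhs (f x) W -> nbhs x [set y | A y -> W (f y)].

Lemma wcontP (T U : topologicalType) (A : set T) (f : T -> U) :
  {within A, continuous f} <-> wcont A f.
Proof.
rewrite subspace_continuousP; split.
  move=> h x Ax W fW. exact: (h x Ax W fW).
move=> h x Ax W fW. exact: (h x Ax W fW).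
Qed.

Lemma wcont_comp (S T U : topologicalType) (B : set S) (A : set T)
   (g : S -> T) (f : T -> U) :
  wcont B g -> wcont A f -> (forall x, B x -> A (g x)) -> wcont B (f \o g).
Proof.
move=> hg hf hBA x Bx W fW.
have := hg x Bx _ (hf (g x) (hBA x Bx) W fW).
apply: filterS => y /= h By; exact: h By (hBA y By).
Qed.

Lemma wcont_cont (T U : topologicalType) (A : set T) (f : T -> U) :
  continuous f -> wcont A f.
Proof.
move=> cf x Ax W fW; have h : nbhs x (f @^-1` W) := cf x W fW.
by apply: filterS h => y h _.
Qed.

Lemma wcont_sub (T U : topologicalType) (A B : set T) (f : T -> U) :
  A `<=` B -> wcont B f -> wcont A f.
Proof.
move=> AB hf x Ax W fW; have := hf x (AB x Ax) W fW.
apply: filterS => y h Ay; exact: h (AB y Ay).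
Qed.

Lemma wcont_pair (T U V : topologicalType) (A : set T) (f : T -> U) (g : T -> V) :
  wcont A f -> wcont A g -> wcont A (fun x => (f x, g x)).
Proof.
move=> hf hg x Ax W /= [[P Q] [/= nP nQ] PQW].
have h1 := hf x Ax P nP; have h2 := hg x Ax Q nQ.
near=> y => Ay; apply: (PQW (f y, g y)); split => /=.
  exact: (near h1 y).
exact: (near h2 y).
Unshelve. all: end_near. Qed.

Section Reals.
Variable R : realType.

Lemma nbhsR_ex (x : R) (P : set R) : nbhs x P ->
  exists2 d : R, 0 < d & forall y, `|y - x| < d -> P y.
Proof.
move=> /nbhs_ballP [d d0 hd]; exists d => // y hy; apply: hd.
by rewrite /ball /= distrC.
Qed.

Lemma nbhsR_in (x : R) (P : set R) (d : R) : 0 < d ->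
  (forall y, `|y - x| < d -> P y) -> nbhs x P.
Proof.
move=> d0 hd; apply/nbhs_ballP; exists d => // y hy; apply: hd.
by move: hy; rewrite /ball /= distrC.
Qed.

Lemma nbhs_prodR_ex (Z : topologicalType) (z : Z) (m : R) (P : set (Z * R)) :
  nbhs (z, m) P -> exists W, nbhs z W /\
    exists2 d : R, 0 < d & forall z' s, W z' -> `|s - m| < d -> P (z', s).
Proof.
move=> [[A B] [/= nA nB] ABP]; exists A; split => //.
have [d d0 hd] := nbhsR_ex nB; exists d => // z' s Az hs.
by apply: (ABP (z', s)); split => //=; apply: hd.
Qed.

Lemma nbhs_prod_in (Z T : topologicalType) (z : Z) (t : T) (A : set Z) (B : set T) :
  nbhs z A -> nbhs t B -> nbhs (z, t) [set p | A p.1 /\ B p.2].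
Proof.
move=> nA nB; exists (A, B) => //.
Qed.

Lemma lc_const (f : R -> R) (al be : R) : al <= be ->
  (forall s, al <= s <= be -> exists2 d : R, 0 < d &
     forall s', al <= s' <= be -> `|s' - s| < d -> f s' = f s) ->
  f be = f al.
Proof.
move=> albe hloc.
pose A := [set T : R | al <= T <= be /\ forall r, al <= r <= T -> f r = f al].
have A0 : A al by split; [rewrite lexx albe | move=> r /andP[h1 h2]; congr f; apply/eqP; rewrite eq_le h1 h2].
have hsA : has_sup A.
  split; first by exists al.
  by exists be => T [/andP[_ ->]].
pose m := sup A.
have alm : al <= m by apply: sup_upper_bound.
have mbe : m <= be.
  apply: sup_le_ub; first by exists al.
  by move=> T [/andP[_ ->]].
have [d d0 hd] : exists2 d : R, 0 < d &
     forall s', al <= s' <= be -> `|s' - m| < d -> f s' = f m by apply: hloc; rewrite alm mbe.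
have [T [/andP[alT Tbe] AT] mT] := sup_adherent d0 hsA.
rewrite -/m in mT.
have Tm : T <= m by apply: sup_upper_bound => //; split; [rewrite alT Tbe | exact: AT].
have fTm : f T = f m.
  apply: hd; first by rewrite alT Tbe.
  by rewrite ltr_norml; apply/andP; split; lra.
have claim : forall T', al <= T' <= be -> T' <= m + d / 2 -> A T'.
  move=> T' /andP[h1 h2] h3; split; first by rewrite h1 h2.
  move=> r /andP[alr rT'].
  have [rT|Tr] := leP r T; first by apply: AT; rewrite alr rT.
  rewrite -(AT T); last by rewrite alT lexx.
  rewrite fTm; apply: hd; first by apply/andP; split; lra.
  by rewrite ltr_norml; apply/andP; split; lra.
have [hle|hlt] := leP (m + d / 2) be.
  have : A (m + d / 2) by apply: claim => //; rewrite hle andbT; lra.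
  move/(sup_upper_bound hsA); rewrite -/m; lra.
have : A be by apply: claim => //; [rewrite albe lexx | lra].
by case=> _ /(_ be); rewrite albe lexx => ->.
Qed.

End Reals.

Section Min.
Variable R : realType.
Lemma min2 (d1 d2 : R) : 0 < d1 -> 0 < d2 -> exists2 d, 0 < d & d <= d1 /\ d <= d2.
Proof.
move=> h1 h2; have [le|lt] := leP d1 d2.
  by exists d1 => //; split.
by exists d2 => //; split => //; apply: ltW.
Qed.

Lemma mono_t (t : nat -> R) N : (forall j, (j < N)%N -> t j < t j.+1) ->
  forall i j, (i <= j)%N -> (j <= N)%N -> t i <= t j.
Proof.
move=> ht i j ij; elim: j ij => [|j IH]; first by rewrite leqn0 => /eqP ->.
rewrite leq_eqVlt => /orP[/eqP -> //|ij] jN.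
apply: le_trans (IH ij (ltnW jN)) (ltW (ht j jN)).
Qed.

Lemma smono_t (t : nat -> R) N : (forall j, (j < N)%N -> t j < t j.+1) ->
  forall i j, (i < j)%N -> (j <= N)%N -> t i < t j.
Proof.
move=> ht i j ij jN; have iN : (i < N)%N by apply: leq_trans ij jN.
apply: lt_le_trans (ht i iN) (mono_t ht ij jN).
Qed.
End Min.

Section Integral.
Variables (R : realType) (X : topologicalType) (w : closed_form R X).

Definition adm (g : R -> X) N (t : nat -> R) (a : nat -> cf_idx w) :=
  [/\ t 0%N = 0, t N = 1, (forall j, (j < N)%N -> t j < t j.+1) &
      (forall j, (j < N)%N -> forall s, t j <= s <= t j.+1 -> cf_U (a j) (g s))].

Definition isum (g : R -> X) N (t : nat -> R) (a : nat -> cf_idx w) :=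
  \sum_(j < N) (cf_f (a j) (g (t j.+1)) - cf_f (a j) (g (t j))).

Lemma integral_valueE g v : integral_value w g v <->
  exists N t a, adm g N t a /\ v = isum g N t a.
Proof.
split.
  by move=> [N [t [a [h1 h2 h3 h4 h5]]]]; exists N, t, a; split.
by move=> [N [t [a [[h1 h2 h3 h4] h5]]]]; exists N, t, a; split.
Qed.

Lemma adm_01 g N t a : adm g N t a -> forall j, (j <= N)%N -> 0 <= t j <= 1.
Proof.
move=> [h0 h1 h2 _] j jN; apply/andP; split.
  by rewrite -h0; apply: (mono_t h2).
by rewrite -h1; apply: (mono_t h2).
Qed.

Definition clamp (lo hi s : R) := if s <= lo then lo else if s <= hi then s else hi.

Lemma clamp_lo lo hi s : s <= lo -> clamp lo hi s = lo.
Proof. by rewrite /clamp => ->. Qed.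

Lemma clamp_mid lo hi s : lo <= s <= hi -> clamp lo hi s = s.
Proof.
rewrite /clamp => /andP[h1 h2]; rewrite h2.
by case: ifP => // h; apply/eqP; rewrite eq_le h h1.
Qed.

Lemma clamp_hi lo hi s : lo <= hi -> hi <= s -> clamp lo hi s = hi.
Proof.
rewrite /clamp => h1 h2; case: ifP => h3.
  by apply/eqP; rewrite eq_le h1 (le_trans h2 h3).
by case: ifP => // h4; apply/eqP; rewrite eq_le h4 h2.
Qed.

Definition Phi (g : R -> X) N (t : nat -> R) (a : nat -> cf_idx w) (s : R) :=
  \sum_(j < N) (cf_f (a j) (g (clamp (t j) (t j.+1) s)) - cf_f (a j) (g (t j))).

Lemma Phi_seg g N t a K s s' : adm g N t a -> (K < N)%N ->
  t K <= s <= t K.+1 -> t K <= s' <= t K.+1 ->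
  Phi g N t a s' - Phi g N t a s = cf_f (a K) (g s') - cf_f (a K) (g s).
Proof.
move=> [h0 h1 hinc _] KN hs hs'.
rewrite /Phi -sumrB (bigD1 (Ordinal KN)) //= big1 ?addr0.
  by rewrite !clamp_mid //; ring.
move=> j /eqP jK.
have jK' : nat_of_ord j <> K by move=> e; apply: jK; apply: val_inj.
case: (ltngtP j K) => [jlt|jgt|//].
- have h : t j.+1 <= t K by apply: (mono_t hinc) => //; exact: ltnW.
  have hj : t j <= t j.+1 by apply: ltW; apply: hinc; apply: ltn_trans jlt KN.
  rewrite !(@clamp_hi (t j) (t j.+1)) //; first by ring.
    by case/andP: hs => h2 _; apply: le_trans h h2.
  by case/andP: hs' => h2 _; apply: le_trans h h2.
- have h : t K.+1 <= t j by apply: (mono_t hinc) => //; apply: ltnW.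
  rewrite !(@clamp_lo (t j) (t j.+1)); first by ring.
    by case/andP: hs => _ h2; apply: le_trans h2 h.
  by case/andP: hs' => _ h2; apply: le_trans h2 h.
Qed.

Lemma Phi0 g N t a : adm g N t a -> Phi g N t a 0 = 0.
Proof.
move=> ha; rewrite /Phi big1 // => j _.
have /andP[h _] := adm_01 ha (ltnW (ltn_ord j)).
by rewrite clamp_lo // subrr.
Qed.

Lemma Phi1 g N t a : adm g N t a -> Phi g N t a 1 = isum g N t a.
Proof.
move=> ha; rewrite /Phi /isum; apply: eq_bigr => j _.
have /andP[_ h] := adm_01 ha (ltn_ord j).
case: ha => _ _ hinc _.
by rewrite clamp_hi //; apply: ltW; apply: hinc.
Qed.

Lemma prim g N t a (psi : R -> R) : adm g N t a ->
  (forall K, (K < N)%N -> forall s, t K <= s <= t K.+1 ->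
     psi s - cf_f (a K) (g s) = psi (t K) - cf_f (a K) (g (t K))) ->
  isum g N t a = psi 1 - psi 0.
Proof.
move=> ha hpsi.
have -> : isum g N t a = \sum_(j < N) (psi (t j.+1) - psi (t j)).
  apply: eq_bigr => j _.
  case: ha => _ _ hinc _.
  have := hpsi j (ltn_ord j) (t j.+1).
  rewrite lexx andbT => /(_ (ltW (hinc j (ltn_ord j)))) e.
  move: e; lra.
rewrite -(big_mkord xpredT (fun j => psi (t j.+1) - psi (t j))).
rewrite (telescope_sumr (fun j => psi (t j))) //.
by case: ha => -> -> _ _.
Qed.

End Integral.
Arguments adm {R X} w g N t a.
Arguments isum {R X} w g N t a.
Arguments Phi {R X} w g N t a s.

Section Seg.
Variables (R : realType) (X : topologicalType) (w : closed_form R X).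

Lemma adm_N g N t a : adm w g N t a -> (0 < N)%N.
Proof.
case=> h0 h1 _ _; case: N h1 => // h1; move: h1; rewrite h0 => /eqP.
by rewrite eq_sym oner_eq0.
Qed.

Lemma right_seg g N t a s0 : adm w g N t a -> 0 <= s0 <= 1 ->
  exists2 K, (K < N)%N & exists2 e : R, 0 < e & forall s', s' <= 1 -> s0 <= s' ->
    s' - s0 < e -> t K <= s' <= t K.+1.
Proof.
move=> ha /andP[s00 s01]; have N0 := adm_N ha.
have [h0 h1 hinc _] := ha.
have [s0lt|s0ge] := ltP s0 1; last first.
  exists N.-1; first by rewrite prednK.
  exists 1 => // s' s'1 s0s' _.
  have e1 : s' = 1 by apply/eqP; rewrite eq_le s'1; apply: le_trans s0ge s0s'.
  rewrite e1 prednK // h1 lexx andbT -h1.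
  by apply: (mono_t hinc) => //; rewrite leq_pred.
have exP : exists j, (fun j => s0 < t j) j by exists N; rewrite /= h1.
case: (ex_minnP exP) => J PJ Jmin.
have JN : (J <= N)%N by apply: Jmin; rewrite h1.
have J0 : (0 < J)%N.
  case: J PJ Jmin JN => // /=; rewrite h0 => h; lra.
exists J.-1; first by rewrite (leq_trans _ JN) // prednK.
exists (t J - s0); first by rewrite subr_gt0.
move=> s' _ s0s' hs'.
have tK : t J.-1 <= s0.
  rewrite leNgt; apply/negP => h.
  have := Jmin _ h; rewrite -ltnS prednK // ltnn //.
rewrite prednK //; apply/andP; split; first by apply: le_trans tK s0s'.
apply: ltW; lra.
Qed.

Lemma left_seg g N t a s0 : adm w g N t a -> 0 <= s0 <= 1 ->
  exists2 K, (K < N)%N & exists2 e : R, 0 < e & forall s', 0 <= s' -> s' <= s0 ->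
    s0 - s' < e -> t K <= s' <= t K.+1.
Proof.
move=> ha /andP[s00 s01]; have N0 := adm_N ha.
have [h0 h1 hinc _] := ha.
have [s0gt|s0le] := ltP 0 s0; last first.
  exists 0%N => //; exists 1 => // s' s'0 s's0 _.
  have e0 : s' = 0 by apply/eqP; rewrite eq_le s'0 andbT; apply: le_trans s's0 s0le.
  rewrite e0 h0 lexx /= -h0; apply: ltW; apply: hinc => //.
have exP : exists j, (fun j => s0 <= t j) j by exists N; rewrite /= h1.
case: (ex_minnP exP) => J PJ Jmin.
have JN : (J <= N)%N by apply: Jmin; rewrite h1.
have J0 : (0 < J)%N.
  case: J PJ Jmin JN => // /=; rewrite h0 => h; lra.
exists J.-1; first by rewrite (leq_trans _ JN) // prednK.
have tK : t J.-1 < s0.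
  rewrite ltNge; apply/negP => h.
  have := Jmin _ h; rewrite -ltnS prednK // ltnn //.
exists (s0 - t J.-1); first by rewrite subr_gt0.
move=> s' _ s's0 hs'.
rewrite prednK //; apply/andP; split; first by apply: ltW; lra.
apply: le_trans s's0 PJ.
Qed.


Lemma side g N1 t1 a1 N2 t2 a2 K K2 s0 : wcont (@unitI R) g ->
  adm w g N1 t1 a1 -> adm w g N2 t2 a2 -> (K < N1)%N -> (K2 < N2)%N ->
  t1 K <= s0 <= t1 K.+1 -> t2 K2 <= s0 <= t2 K2.+1 ->
  exists2 d : R, 0 < d & forall s', t1 K <= s' <= t1 K.+1 ->
    t2 K2 <= s' <= t2 K2.+1 -> `|s' - s0| < d ->
    Phi w g N2 t2 a2 s' - cf_f (a1 K) (g s') =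
    Phi w g N2 t2 a2 s0 - cf_f (a1 K) (g s0).
Proof.
move=> gc ha1 ha2 KN K2N hs01 hs02.
have U1 := ha1.  case: U1 => _ _ _ U1.
have U2 := ha2.  case: U2 => _ _ _ U2.
have [Nb [nN hN]] := cf_locconst (U2 K2 K2N s0 hs02) (U1 K KN s0 hs01).
have I01 : forall s', t1 K <= s' <= t1 K.+1 -> unitI s'.
  move=> s' /andP[h1 h2].
  have /andP[h3 _] := adm_01 ha1 (ltnW KN).
  have /andP[_ h4] := adm_01 ha1 KN.
  rewrite /unitI /=; apply/andP; split; [exact: le_trans h3 h1 | exact: le_trans h2 h4].
have [d d0 hd] := nbhsR_ex (gc s0 (I01 s0 hs01) Nb nN).
exists d => // s' hs'1 hs'2 hs'd.
have := hN (g s') (hd s' hs'd (I01 s' hs'1)) (U2 K2 K2N s' hs'2) (U1 K KN s' hs'1).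
have := Phi_seg ha2 K2N hs02 hs'2.
lra.
Qed.

Lemma isum_unique g N1 t1 a1 N2 t2 a2 : wcont (@unitI R) g ->
  adm w g N1 t1 a1 -> adm w g N2 t2 a2 ->
  isum w g N1 t1 a1 = isum w g N2 t2 a2.
Proof.
move=> gc ha1 ha2.
rewrite -(Phi1 ha2).
have -> : Phi w g N2 t2 a2 1 = Phi w g N2 t2 a2 1 - Phi w g N2 t2 a2 0.
  by rewrite (Phi0 ha2) subr0.
apply: (prim (psi := Phi w g N2 t2 a2) ha1) => K KN s hs.
set D := fun s => Phi w g N2 t2 a2 s - cf_f (a1 K) (g s).
have I01 : forall s', t1 K <= s' <= t1 K.+1 -> 0 <= s' <= 1.
  move=> s' /andP[h1 h2].
  have /andP[h3 _] := adm_01 ha1 (ltnW KN).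
  have /andP[_ h4] := adm_01 ha1 KN.
  apply/andP; split; [exact: le_trans h3 h1 | exact: le_trans h2 h4].
case/andP: hs => hs1 hs2.
apply: (@lc_const R D) => // s0 /andP[h01 h02].
have hs0 : t1 K <= s0 <= t1 K.+1 by rewrite h01 (le_trans h02 hs2).
have [KR KRN [eR eR0 heR]] := right_seg ha2 (I01 s0 hs0).
have [KL KLN [eL eL0 heL]] := left_seg ha2 (I01 s0 hs0).
have hR0 : t2 KR <= s0 <= t2 KR.+1.
  by apply: heR; rewrite ?lexx ?subrr //; case/andP: (I01 s0 hs0).
have hL0 : t2 KL <= s0 <= t2 KL.+1.
  by apply: heL; rewrite ?lexx ?subrr //; case/andP: (I01 s0 hs0).
have [dR dR0 hdR] := side gc ha1 ha2 KN KRN hs0 hR0.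
have [dL dL0 hdL] := side gc ha1 ha2 KN KLN hs0 hL0.
have [d1 d10 [d1R d1L]] := min2 dR0 dL0.
have [d2 d20 [d2R d2L]] := min2 eR0 eL0.
have [d d0 [dd1 dd2]] := min2 d10 d20.
exists d => // s' /andP[h1 h2] hd.
have hs' : t1 K <= s' <= t1 K.+1 by rewrite h1 (le_trans h2 hs2).
have /andP[s'0 s'1] := I01 s' hs'.
move: hd; rewrite ltr_norml => /andP[hd1 hd2].
have [le|lt] := leP s0 s'.
  apply: hdR => //; last by rewrite ltr_norml; apply/andP; split; lra.
  apply: heR => //; lra.
apply: hdL => //; last by rewrite ltr_norml; apply/andP; split; lra.
apply: heL => //; [lra | lra].
Qed.

Lemma path_integralE g v : wcont (@unitI R) g -> integral_value w g v ->
  path_integral w g = v.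
Proof.
move=> gc hv; rewrite /path_integral.
have := xgetPex 0 (ex_intro _ v hv).
move: (xget _ _) => v' /integral_valueE [N' [t' [a' [ha' ->]]]].
move: hv => /integral_valueE [N [t [a [ha ->]]]].
exact: isum_unique.
Qed.

End Seg.

Section Sub.
Variables (R : realType) (X : topologicalType) (w : closed_form R X).

Lemma open_nbhs' (x : X) (U : set X) : open U -> U x -> nbhs x U.
Proof. by move=> oU Ux; apply: open_nbhs_nbhs; split. Qed.

Definition subP (Z : topologicalType) (D : set Z) (H : Z -> R -> X) (z0 : Z) (T : R) :=
  exists W, nbhs z0 W /\ exists N (t : nat -> R) (a : nat -> cf_idx w),
    [/\ t 0%N = 0, t N = T, (forall j, (j < N)%N -> t j < t j.+1) &
        forall j, (j < N)%N -> forall z, W z -> D z -> forall s, t j <= s <= t j.+1 ->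
          cf_U (a j) (H z s)].

Lemma sub_exists (Z : topologicalType) (D : set Z) (H : Z -> R -> X) z0 :
  wcont [set p : Z * R | D p.1 /\ unitI p.2] (fun p => H p.1 p.2) -> D z0 ->
  subP D H z0 1.
Proof.
move=> hc Dz0.
have [a0 _] := cf_cover w (H z0 0).
pose A := [set T : R | 0 <= T <= 1 /\ subP D H z0 T].
have A0 : A 0.
  split; first by rewrite lexx ler01.
  exists setT; split; first exact: filterT.
  by exists 0%N, (fun _ => 0), (fun _ => a0); split.
have hsA : has_sup A.
  split; first by exists 0.
  by exists 1 => T [/andP[_ ->]].
pose m := sup A.
have m0 : 0 <= m by apply: sup_upper_bound.
have m1 : m <= 1.
  apply: sup_le_ub; first by exists 0.
  by move=> T [/andP[_ ->]].
have [b hb] := cf_cover w (H z0 m).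
have Im : unitI m by rewrite /unitI /= m0 m1.
have := hc (z0, m) (conj Dz0 Im) _ (open_nbhs' (cf_open b) hb).
move=> /nbhs_prodR_ex [W1 [nW1 [d d0 hd]]].
have [T [/andP[T0 T1] PT] mT] := sup_adherent d0 hsA.
rewrite -/m in mT.
have Tm : T <= m by apply: sup_upper_bound => //; split; [rewrite T0 T1 | exact: PT].
have [T1'|Tlt1] := eqVneq T 1; first by rewrite -T1'.
have {}Tlt1 : T < 1 by rewrite lt_neqAle Tlt1 T1.
pose T' := if m + d / 2 <= 1 then m + d / 2 else 1.
have T'1 : T' <= 1 by rewrite /T'; case: ifP => // _.
have T'md : T' <= m + d / 2 by rewrite /T'; case: ifP => // /negbT; rewrite -ltNge => h; lra.
have TT' : T < T' by rewrite /T'; case: ifP => _; lra.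
have PT' : subP D H z0 T'.
  case: PT => W2 [nW2 [N [t [a [t0 tN tinc tcov]]]]].
  exists (W1 `&` W2); split; first exact: filterI.
  exists N.+1, (fun j => if (j <= N)%N then t j else T'),
              (fun j => if (j < N)%N then a j else b).
  split => /=.
  - by [].
  - by rewrite ltnn.
  - move=> j; rewrite ltnS => jle; case: (ltnP j N) => jN.
      by rewrite (ltnW jN) ?jN; apply: tinc.
    have -> : j = N by apply/eqP; rewrite eqn_leq jle jN.
    by rewrite leqnn tN.
  - move=> j; rewrite ltnS => jle z [W1z W2z] Dz s; case: (ltnP j N) => jN.
      by rewrite (ltnW jN) ?jN => hs; apply: tcov.
    have -> : j = N by apply/eqP; rewrite eqn_leq jle jN.
      rewrite leqnn ?ltnn tN => /andP[h1 h2].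
      have := hd z s W1z; apply.
        rewrite ltr_norml; apply/andP; split; lra.
      split => //; rewrite /unitI /=; apply/andP; split; lra.
have AT' : A T' by split => //; apply/andP; split => //; lra.
have T'm : T' <= m by apply: sup_upper_bound.
move: PT' T'm; rewrite /T'; case: ifP => // _ _; lra.
Qed.

End Sub.

Definition famc (R : realType) (Z X : topologicalType) (D : set Z) (H : Z -> R -> X) :=
  wcont [set p : Z * R | D p.1 /\ unitI p.2] (fun p => H p.1 p.2).

Section Fam.
Variables (R : realType) (X : topologicalType).

Lemma slice_s (Z : topologicalType) (D : set Z) (H : Z -> R -> X) z :
  famc D H -> D z -> wcont (@unitI R) (H z).
Proof.
move=> hc Dz s Is W nW.
have [[A B] [/= nA nB] ABP] := hc (z, s) (conj Dz Is) W nW.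
apply: filterS nB => s' Bs' Is'.
by apply: (ABP (z, s')) => //; split => //=; apply: nbhs_singleton.
Qed.

Lemma slice_z (Z : topologicalType) (D : set Z) (H : Z -> R -> X) s :
  famc D H -> unitI s -> wcont D (fun z => H z s).
Proof.
move=> hc Is z Dz W nW.
have [[A B] [/= nA nB] ABP] := hc (z, s) (conj Dz Is) W nW.
apply: filterS nA => z' Az' Dz'.
by apply: (ABP (z', s)) => //; split => //=; apply: nbhs_singleton.
Qed.

Lemma path_famc (Z : topologicalType) (D : set Z) (g : R -> X) :
  wcont (@unitI R) g -> famc D (fun _ : Z => g).
Proof.
move=> gc; rewrite /famc /wcont => -[z s] /= [Dz Is] W nW.
have := gc s Is W nW => nB.
have nT : nbhs z setT by apply: filterT.
apply: filterS (nbhs_prod_in nT nB) => -[z' s'] /= [_ h] [_ Is']; exact: h.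
Qed.

Variable w : closed_form R X.

Lemma path_adm (g : R -> X) : wcont (@unitI R) g ->
  exists N t a, adm w g N t a.
Proof.
move=> gc.
have [W [nW [N [t [a [t0 tN tinc tcov]]]]]] :=
  sub_exists w (H := fun _ : R => g) (z0 := (0:R)) (path_famc (Z:=R) (D:=setT) gc) I.
exists N, t, a; split => // j jN s hs.
exact: (tcov j jN 0 (nbhs_singleton nW) I s hs).
Qed.

Lemma path_integral_isum g N t a : wcont (@unitI R) g -> adm w g N t a ->
  path_integral w g = isum w g N t a.
Proof.
move=> gc ha; apply: path_integralE => //.
by apply/integral_valueE; exists N, t, a.
Qed.

Lemma path_integral_iv g : wcont (@unitI R) g -> integral_value w g (path_integral w g).
Proof.
move=> gc; have [N [t [a ha]]] := path_adm gc.
rewrite (path_integral_isum gc ha); by apply/integral_valueE; exists N, t, a; split.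
Qed.

Lemma track_local (Z : topologicalType) (D : set Z) (H : Z -> R -> X) z0 :
  famc D H -> D z0 -> exists M : R,
    \forall z \near z0, D z -> `|path_integral w (H z)| <= M.
Proof.
move=> hc Dz0.
have [W [nW [N [t [a [t0 tN tinc tcov]]]]]] := sub_exists w hc Dz0.
have ha : forall z, W z -> D z -> adm w (H z) N t a.
  by move=> z Wz Dz; split => // j jN s hs; apply: tcov.
have I01 : forall j, (j <= N)%N -> unitI (t j).
  move=> j jN; rewrite /unitI /=; apply/andP; split.
    by rewrite -t0; apply: (mono_t tinc).
  by rewrite -tN; apply: (mono_t tinc).
pose c j s := cf_f (a j) (H z0 s).
exists (\sum_(j < N) (`|c j (t j.+1)| + `|c j (t j)| + 2)).
have near1 : forall (j : 'I_N) (s : R), t j <= s <= t j.+1 ->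
    \forall z \near z0, D z -> `|cf_f (a j) (H z s) - c j s| < 1.
  move=> j s hs.
  have Is : unitI s.
    rewrite /unitI /=; case/andP: hs => h1 h2; apply/andP; split.
      by apply: le_trans h1; case/andP: (I01 j (ltnW (ltn_ord j))).
    by apply: le_trans h2 _; case/andP: (I01 j.+1 (ltn_ord j)).
  have hU : cf_U (a j) (H z0 s) by apply: tcov => //; apply: nbhs_singleton.
  have fc : wcont (cf_U (a j)) (cf_f (a j)) by apply/wcontP => x; apply: cf_cont.
  have n1 := fc _ hU _ (nbhsx_ballx (cf_f (a j) (H z0 s)) _ ltr01).
  have n2 := slice_z hc Is Dz0 n1.
  apply: filterS (filterI nW n2) => z [Wz h] Dz.
  have := h Dz (tcov j (ltn_ord j) z Wz Dz s hs).
  by rewrite /ball /= distrC.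
have nall : \forall z \near z0, forall j : 'I_N,
    (D z -> `|cf_f (a j) (H z (t j.+1)) - c j (t j.+1)| < 1) /\
    (D z -> `|cf_f (a j) (H z (t j)) - c j (t j)| < 1).
  apply: filter_forall => j. apply: filterI.
    apply: (near1 j (t j.+1)); rewrite lexx andbT; apply: ltW; apply: tinc (ltn_ord j).
  apply: (near1 j (t j)); rewrite lexx /=; apply: ltW; apply: tinc (ltn_ord j).
apply: filterS (filterI nW nall) => z [Wz hall] Dz.
rewrite (path_integral_isum (slice_s hc Dz) (ha z Wz Dz)) /isum.
apply: le_trans (ler_norm_sum _ _ _) _; apply: ler_sum => j _.
have [h1 h2] := hall j.
have := h1 Dz; have := h2 Dz.
set u := cf_f (a j) (H z (t j.+1)); set v := cf_f (a j) (H z (t j)).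
set p := c j (t j.+1); set q := c j (t j) => hv hu.
have e : u - v = (u - p) - (v - q) + (p - q) by ring.
rewrite e; apply: le_trans (ler_normD _ _) _.
apply: le_trans (lerD (ler_normB _ _) (ler_normB _ _)) _.
lra.
Qed.

Lemma track_bound (Z : topologicalType) (K : set Z) (H : Z -> R -> X) :
  compact K -> famc K H -> exists M : R, forall z, K z -> `|path_integral w (H z)| <= M.
Proof.
move=> cK hc.
have nc := proj2 (near_covering_withinP K) (proj1 (compact_near_coveringP K) cK).
have hF : \forall M \near (@pinfty_nbhs R), K `<=` (fun z => `|path_integral w (H z)| <= M).
  apply: (nc R (@pinfty_nbhs R) (fun M z => `|path_integral w (H z)| <= M)).
  move=> z Kz; have [M0 hM0] := track_local hc Kz.
  exists ([set z | K z -> `|path_integral w (H z)| <= M0], [set M | M0 <= M]).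
    by split => //=; apply: nbhs_pinfty_ge; apply: num_real.
  move=> [z' M] /= [h1 h2] Kz'; apply: le_trans (h1 Kz') h2.
have [M hM] := filter_ex hF.
by exists M.
Qed.

End Fam.

Section Cat.
Variables (R : realType) (X : topologicalType).

Definition catp (al be : R -> X) : R -> X :=
  fun s => if s <= 2^-1 then al (2 * s) else be (2 * s - 1).

Definition revp (al : R -> X) : R -> X := fun s => al (1 - s).

Lemma catpL al be s : s <= 2^-1 -> catp al be s = al (2 * s).
Proof. by rewrite /catp => ->. Qed.

Lemma catpR al be s : al 1 = be 0 -> 2^-1 <= s -> catp al be s = be (2 * s - 1).
Proof.
rewrite /catp => e hs; case: ifP => // h.
have -> : s = 2^-1 by apply/eqP; rewrite eq_le h hs.
by rewrite mulfV ?subrr // pnatr_eq0.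
Qed.

Lemma pull_aff (Z : topologicalType) (z : Z) (s c e : R) (P : set (Z * R)) :
  0 < c -> nbhs (z, c * s + e) P -> nbhs (z, s) [set p | P (p.1, c * p.2 + e)].
Proof.
move=> c0 [[A B] [/= nA nB] AB].
have [d d0 hd] := nbhsR_ex nB.
have nB' : nbhs s [set u | B (c * u + e)].
  apply: (@nbhsR_in _ _ _ (d / c)); first by rewrite divr_gt0.
  move=> y hy; apply: hd.
  have -> : c * y + e - (c * s + e) = c * (y - s) by ring.
  rewrite normrM gtr0_norm // -ltr_pdivlMl // mulrC.
  by move: hy; rewrite mulrC.
apply: filterS (nbhs_prod_in nA nB') => -[z' u] /= [h1 h2].
by apply: (AB (z', c * u + e)).
Qed.

Lemma catH_famc (Z : topologicalType) (D : set Z) (A B : Z -> R -> X) :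
  famc D A -> famc D B -> (forall z, D z -> A z 1 = B z 0) ->
  famc D (fun z => catp (A z) (B z)).
Proof.
move=> hA hB hAB [z s] /= [Dz Is] W nW.
have h2 : (0 : R) < 2 by [].
have Is' := Is; move: Is'; rewrite /unitI /= => /andP[s0 s1].
have FA : s <= 2^-1 -> nbhs (z, s)
    [set p | D p.1 /\ unitI p.2 /\ p.2 <= 2^-1 -> W (catp (A p.1) (B p.1) p.2)].
  move=> hs.
  have I2 : unitI (2 * s) by rewrite /unitI /=; apply/andP; split; lra.
  have nW' : nbhs (A z (2 * s + 0)) W by rewrite addr0 -(catpL (A z) (B z) hs).
  have I2' : unitI (2 * s + 0) by rewrite addr0.
  have := pull_aff h2 (hA (z, 2 * s + 0) (conj Dz I2') W nW').
  apply: filterS => -[z' u] /= h [Dz' [Iu hu]].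
  rewrite catpL //; rewrite addr0 in h; apply: h; split => //.
  by move: Iu; rewrite /unitI /= => /andP[? ?]; apply/andP; split; lra.
have FB : 2^-1 <= s -> nbhs (z, s)
    [set p | D p.1 /\ unitI p.2 /\ 2^-1 <= p.2 -> W (catp (A p.1) (B p.1) p.2)].
  move=> hs.
  have nW' : nbhs (B z (2 * s + -1)) W by rewrite -(catpR (hAB z Dz) hs).
  have I2' : unitI (2 * s + -1) by rewrite /unitI /=; apply/andP; split; lra.
  have := pull_aff h2 (hB (z, 2 * s + -1) (conj Dz I2') W nW').
  apply: filterS => -[z' u] /= h [Dz' [Iu hu]].
  rewrite catpR //; first last.
    by apply: hAB.
  apply: h; split => //.
  by move: Iu; rewrite /unitI /= => /andP[? ?]; apply/andP; split; lra.
have [hlt|hge] := ltP s (2^-1).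
  have nlt : nbhs (z, s) [set p : Z * R | p.2 < 2^-1].
    have nT : nbhs z setT by apply: filterT.
    have nl : nbhs s [set u : R | u < 2^-1].
      apply: (@nbhsR_in _ _ _ (2^-1 - s)); first by rewrite subr_gt0.
      by move=> y; rewrite ltr_norml => /andP[_]; rewrite ltrD2r.
    by apply: filterS (nbhs_prod_in nT nl) => p [].
  apply: filterS (filterI nlt (FA (ltW hlt))) => p [hp h] [Dp Ip].
  by apply: h; split => //; split => //; apply: ltW.
have [hgt|heq] := ltP (2^-1) s.
  have ngt : nbhs (z, s) [set p : Z * R | 2^-1 < p.2].
    have nT : nbhs z setT by apply: filterT.
    have nl : nbhs s [set u : R | 2^-1 < u].
      apply: (@nbhsR_in _ _ _ (s - 2^-1)); first by rewrite subr_gt0.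
      by move=> y; rewrite ltr_norml opprB => /andP[h _]; move: h; rewrite ltrD2r.
    by apply: filterS (nbhs_prod_in nT nl) => p [].
  apply: filterS (filterI ngt (FB (ltW hgt))) => p [hp h] [Dp Ip].
  by apply: h; split => //; split => //; apply: ltW.
have e : s = 2^-1 by apply/eqP; rewrite eq_le heq hge.
apply: filterS (filterI (FA heq) (FB hge)) => p [g1 g2] [Dp Ip].
have [hp|hp] := leP p.2 (2^-1).
  by apply: g1.
by apply: g2; split => //; split => //; apply: ltW.
Qed.

Lemma catp_path al be : wcont (@unitI R) al -> wcont (@unitI R) be -> al 1 = be 0 ->
  wcont (@unitI R) (catp al be).
Proof.
move=> ha hb e.
have := @catH_famc R setT (fun _ => al) (fun _ => be) (path_famc ha) (path_famc hb) (fun _ _ => e).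
by move=> /(slice_s (z:=0)); apply.
Qed.

Lemma revp_path al : wcont (@unitI R) al -> wcont (@unitI R) (revp al).
Proof.
move=> ha s Is W nW.
have I1 : unitI (1 - s) by move: Is; rewrite /unitI /= => /andP[? ?]; apply/andP; split; lra.
have [d d0 hd] := nbhsR_ex (ha (1 - s) I1 W nW).
apply: (@nbhsR_in _ _ _ d) => // y hy Iy; apply: hd.
  have -> : 1 - y - (1 - s) = - (y - s) by ring.
  by rewrite normrN.
by move: Iy; rewrite /unitI /= => /andP[? ?]; apply/andP; split; lra.
Qed.
End Cat.

Section CatInt.
Variables (R : realType) (X : topologicalType) (w : closed_form R X).

Lemma two_half (x : R) : 2 * (x / 2) = x.
Proof. by rewrite mulrC -mulrA mulVf ?mulr1 // pnatr_eq0. Qed.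

Definition tc (t1 t2 : nat -> R) N1 j :=
  if (j <= N1)%N then t1 j / 2 else (1 + t2 (j - N1)%N) / 2.
Definition ac (a1 a2 : nat -> cf_idx w) N1 j :=
  if (j < N1)%N then a1 j else a2 (j - N1)%N.

Lemma adm_cat al be N1 t1 a1 N2 t2 a2 :
  adm w al N1 t1 a1 -> adm w be N2 t2 a2 -> al 1 = be 0 ->
  adm w (catp al be) (N1 + N2) (tc t1 t2 N1) (ac a1 a2 N1) /\
  isum w (catp al be) (N1 + N2) (tc t1 t2 N1) (ac a1 a2 N1) =
  isum w al N1 t1 a1 + isum w be N2 t2 a2.
Proof.
move=> ha1 ha2 e.
have N20 := adm_N ha2.
have [t10 t1N t1inc t1cov] := ha1.
have [t20 t2N t2inc t2cov] := ha2.
have h01 := adm_01 ha1; have h02 := adm_01 ha2.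
have tcL : forall j, (j <= N1)%N -> tc t1 t2 N1 j = t1 j / 2.
  by move=> j jN; rewrite /tc jN.
have tcR : forall j, (N1 <= j)%N -> tc t1 t2 N1 j = (1 + t2 (j - N1)%N) / 2.
  move=> j jN; rewrite /tc; case: ifP => // jN'.
  have -> : j = N1 by apply/eqP; rewrite eqn_leq jN jN'.
  by rewrite subnn t1N t20 addr0.
have acL : forall j, (j < N1)%N -> ac a1 a2 N1 j = a1 j by move=> j jN; rewrite /ac jN.
have acR : forall j, (N1 <= j)%N -> ac a1 a2 N1 j = a2 (j - N1)%N.
  by move=> j jN; rewrite /ac ltnNge jN.
have cL : forall s, s <= 2^-1 -> catp al be s = al (2 * s) by move=> s; apply: catpL.
have cR : forall s, 2^-1 <= s -> catp al be s = be (2 * s - 1) by move=> s; apply: catpR.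
split; first split.
- by rewrite tcL // t10 mul0r.
- by rewrite tcR ?leq_addr // addKn t2N; field.
- move=> j jN; case: (ltnP j N1) => jN1.
    rewrite tcL ?(ltnW jN1) // tcL //.
    by rewrite ltr_pM2r ?invr_gt0 //; apply: t1inc.
  rewrite tcR // tcR ?(leq_trans jN1) // subSn //.
  rewrite ltr_pM2r ?invr_gt0 // ltrD2l; apply: t2inc.
  by rewrite ltn_subLR.
- move=> j jN s; case: (ltnP j N1) => jN1.
    rewrite tcL ?(ltnW jN1) // tcL // acL // => /andP[h1 h2].
    have /andP[_ u1] := h01 j.+1 jN1.
    rewrite cL; last by lra.
    apply: t1cov => //; apply/andP; split; lra.
  rewrite tcR // tcR ?(leq_trans jN1) // subSn // acR // => /andP[h1 h2].
  have jN2 : (j - N1 < N2)%N by rewrite ltn_subLR.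
  have /andP[u0 _] := h02 (j - N1)%N (ltnW jN2).
  rewrite cR; last by lra.
  apply: t2cov => //; apply/andP; split; lra.
rewrite /isum big_split_ord /=; congr (_ + _); apply: eq_bigr => i _.
  have iN := ltn_ord i.
  rewrite acL // (tcL i (ltnW iN)) (tcL i.+1 iN).
  have /andP[_ u1] := h01 i.+1 iN; have /andP[_ u2] := h01 i (ltnW iN).
  by rewrite !cL ?two_half //; lra.
have e2 : forall x : R, 2 * ((1 + x) / 2) - 1 = x by move=> x; rewrite two_half; ring.
rewrite acR ?leq_addr // addKn.
rewrite (tcR (N1 + i) (leq_addr _ _)) -addnS (tcR (N1 + i.+1) (leq_addr _ _)) !addKn.
have iN := ltn_ord i.
have /andP[u1 _] := h02 i.+1 iN; have /andP[u2 _] := h02 i (ltnW iN).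
by rewrite !cR ?e2 //; lra.
Qed.

Lemma path_integral_cat al be : wcont (@unitI R) al -> wcont (@unitI R) be ->
  al 1 = be 0 ->
  path_integral w (catp al be) = path_integral w al + path_integral w be.
Proof.
move=> ha hb e.
have [N1 [t1 [a1 h1]]] := path_adm w ha.
have [N2 [t2 [a2 h2]]] := path_adm w hb.
have [hc hs] := adm_cat h1 h2 e.
rewrite (path_integral_isum (catp_path ha hb e) hc) hs.
by rewrite -(path_integral_isum ha h1) -(path_integral_isum hb h2).
Qed.

End CatInt.

Section Tele.
Variable R : realType.
Lemma tele_mixed (G : nat -> R -> R) (tau : nat -> R) N :
  (forall j, (0 < j)%N -> (j < N)%N -> G j.-1 (tau j) = G j (tau j)) ->
  forall n, (n < N)%N ->
  \sum_(j < n.+1) (G j (tau j.+1) - G j (tau j)) = G n (tau n.+1) - G 0%N (tau 0%N).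
Proof.
move=> hm; elim=> [|n IH] nN; first by rewrite big_ord_recr big_ord0 /= add0r.
rewrite big_ord_recr /= IH ?(ltn_trans _ nN) //.
have := hm n.+1 isT nN; rewrite /= => ->; ring.
Qed.
End Tele.

Section HI.
Variables (R : realType) (X : topologicalType) (w : closed_form R X).

Lemma mix_near (S : R -> R -> X) t0 (W : set R) s (b c : cf_idx w) :
  famc (@unitI R) S -> unitI t0 -> unitI s -> W t0 ->
  (forall t, W t -> unitI t -> cf_U b (S t s) /\ cf_U c (S t s)) ->
  \forall t \near t0, W t -> unitI t ->
     cf_f b (S t s) - cf_f c (S t s) = cf_f b (S t0 s) - cf_f c (S t0 s).
Proof.
move=> hc It0 Is Wt0 hU.
have [Ub Uc] := hU t0 Wt0 It0.
have [Nb [nN hN]] := cf_locconst Ub Uc.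
have n2 := slice_z hc Is It0 nN.
apply: filterS n2 => t h Wt It.
have [Ub' Uc'] := hU t Wt It.
exact: hN _ (h It) Ub' Uc'.
Qed.

Lemma HI (S : R -> R -> X) :
  famc (@unitI R) S -> (forall t, unitI t -> S t 0 = S t 1) ->
  path_integral w (S 0) = path_integral w (S 1).
Proof.
move=> hc hloop; apply/esym.
apply: (@lc_const R (fun t => path_integral w (S t))); first exact: ler01.
move=> t0 It0.
have [W [nW [N [tau [a [t0' tN tinc tcov]]]]]] := sub_exists w hc It0.
have Wt0 : W t0 := nbhs_singleton nW.
have ha : forall t, W t -> unitI t -> adm w (S t) N tau a.
  by move=> t Wt It; split => // j jN s hs; apply: tcov.
have N0 : (0 < N)%N := adm_N (ha t0 Wt0 It0).
have Itau : forall j, (j <= N)%N -> unitI (tau j).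
  move=> j jN; rewrite /unitI /=; apply/andP; split.
    by rewrite -t0'; apply: (mono_t tinc).
  by rewrite -tN; apply: (mono_t tinc).
have nall : \forall t \near t0, forall j : 'I_N, (0 < j)%N -> W t -> unitI t ->
   cf_f (a j.-1) (S t (tau j)) - cf_f (a j) (S t (tau j)) =
   cf_f (a j.-1) (S t0 (tau j)) - cf_f (a j) (S t0 (tau j)).
  apply: (@filter_forall _ _ _ (nbhs t0) _) => j; have jN := ltn_ord j.
  case: (posnP j) => [->|j0]; first by apply: nearW.
  apply: filterS (mix_near hc It0 (Itau j (ltnW jN)) Wt0 _) => [t h _|t Wt It]; first exact: h.
  split.
    apply: tcov => //; first by rewrite prednK // (ltnW jN).
    by rewrite prednK // lexx andbT; apply: (mono_t tinc); [exact: leq_pred | exact: ltnW].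
  by apply: tcov => //; rewrite lexx /=; apply: ltW; apply: tinc.
have nloop := mix_near (s := 0) (b := a N.-1) (c := a 0%N) hc It0 (eq_ind _ (@unitI R) (Itau 0%N isT) _ t0') Wt0.
have nloop2 : \forall t \near t0, W t -> unitI t ->
     cf_f (a N.-1) (S t 0) - cf_f (a 0%N) (S t 0) =
     cf_f (a N.-1) (S t0 0) - cf_f (a 0%N) (S t0 0).
  apply: nloop => t Wt It; split.
    rewrite (hloop t It) -tN; apply: tcov; rewrite ?prednK ?lexx ?andbT //.
    by apply: (mono_t tinc); [exact: leq_pred | done].
  rewrite -t0'; apply: tcov; rewrite ?lexx //=; by apply: ltW; apply: (tinc 0%N N0).
have nfin : \forall t \near t0, unitI t ->
    path_integral w (S t) = path_integral w (S t0).
  apply: filterS (filterI nW (filterI nall nloop2)) => t [Wt [hm hl]] It.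
  rewrite (path_integral_isum (slice_s hc It) (ha t Wt It)).
  rewrite (path_integral_isum (slice_s hc It0) (ha t0 Wt0 It0)).
  apply/eqP; rewrite -subr_eq0; apply/eqP.
  rewrite /isum -sumrB.
  pose G j s := cf_f (a j) (S t s) - cf_f (a j) (S t0 s).
  have -> : \sum_(i < N) (cf_f (a i) (S t (tau i.+1)) - cf_f (a i) (S t (tau i)) -
     (cf_f (a i) (S t0 (tau i.+1)) - cf_f (a i) (S t0 (tau i)))) =
     \sum_(j < N) (G j (tau j.+1) - G j (tau j)).
    by apply: eq_bigr => j _; rewrite /G; ring.
  have mixed : forall j, (0 < j)%N -> (j < N)%N -> G j.-1 (tau j) = G j (tau j).
    move=> j j0 jN; have := hm (Ordinal jN) j0 Wt It; rewrite /G /=; lra.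
  have hN1 : (N.-1 < N)%N by rewrite ltn_predL.
  have key := tele_mixed mixed hN1.
  rewrite prednK // in key; rewrite key tN t0' /G.
  rewrite -(hloop t It) -(hloop t0 It0).
  move: (hl Wt It); lra.
have [d d0 hd] := nbhsR_ex nfin.
exists d => // t' /andP[h1 h2] ht'.
by apply: hd => //; rewrite /unitI /= h1 h2.
Qed.

End HI.

Lemma fst_cont (T U : topologicalType) : continuous (fun p : T * U => p.1).
Proof.
move=> [x y] W nW; exists (W, setT) => //=; first by split => //; apply: filterT.
by move=> [a b] [].
Qed.

Lemma snd_cont (T U : topologicalType) : continuous (fun p : T * U => p.2).
Proof.
move=> [x y] W nW; exists (setT, W) => //=; first by split => //; apply: filterT.
by move=> [a b] [].
Qed.

Lemma bigU_in (T : Type) (I : eqType) (F : I -> set T) (s : seq I) i x :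
  i \in s -> F i x -> (\big[setU/set0]_(j <- s) F j) x.
Proof.
elim: s => //= a s IH; rewrite in_cons => /orP[/eqP ->|h] Fx; rewrite big_cons.
  by left.
by right; apply: IH.
Qed.

Section Disk.
Variable R : realType.

Lemma sum_cont (T : topologicalType) n (f : 'I_n -> T -> R) :
  (forall i, continuous (f i)) -> continuous (fun x => \sum_(i < n) f i x).
Proof.
elim: n f => [|n IH] f hf.
  have -> : (fun x => \sum_(i < 0) f i x) = (fun _ => 0).
    by apply: funext => x; rewrite big_ord0.
  exact: cst_continuous.
have -> : (fun x => \sum_(i < n.+1) f i x) =
    (fun x => \sum_(i < n) f (widen_ord (leqnSn n) i) x) + f ord_max.
  by apply: funext => x; rewrite big_ord_recr.
move=> x; apply: continuousD; last exact: hf.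
by apply: IH => i; apply: hf.
Qed.

Lemma sqnorm_cont n : continuous (@sqnorm R n).
Proof.
rewrite /sqnorm; apply: sum_cont => i x.
have -> : (fun v : 'rV[R]_n => v ord0 i ^+ 2) = (fun v => v ord0 i) \* (fun v => v ord0 i).
  by apply: funext => v; rewrite /= expr2.
by apply: continuousM; apply: coord_continuous.
Qed.

Lemma disk_closed n : closed (@disk R n).
Proof.
have -> : @disk R n = (@sqnorm R n) @^-1` [set x | x <= 1] by [].
apply: closed_comp; last exact: closed_le.
by move=> x _; apply: sqnorm_cont.
Qed.

Lemma disk_coord n (v : 'rV[R]_n) i : disk v -> -1 <= v ord0 i <= 1.
Proof.
rewrite /disk /sqnorm /= (bigD1 i) //= => h.
have : 0 <= \sum_(j < n | j != i) v ord0 j ^+ 2 by apply: sumr_ge0 => j _; apply: sqr_ge0.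
move: h; set a := v ord0 i; set b := \sum_(_ < _ | _) _ => h1 h2.
have : a ^+ 2 <= 1 by lra.
rewrite expr2 => h3; apply/andP; split; nra.
Qed.

Lemma disk_compact n : compact (@disk R n).
Proof.
have Mnco : compact [set v : 'rV[R]_n | forall i, v ord0 i \in `[(-1 : R), 1]].
  apply: (@rV_compact _  _ (fun=> `[(-1 : R), 1]%classic)).
  by move=> _; apply: segment_compact.
apply: (subclosed_compact (disk_closed (n:=n)) Mnco) => v hv i.
by rewrite in_itv /=; apply: disk_coord.
Qed.

Lemma sqnormZ n (s : R) (v : 'rV[R]_n) : sqnorm (s *: v) = s ^+ 2 * sqnorm v.
Proof.
rewrite /sqnorm mulr_sumr; apply: eq_bigr => i _; rewrite mxE exprMn //.
Qed.

Lemma diskZ n (s : R) (v : 'rV[R]_n) : unitI s -> disk v -> disk (s *: v).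
Proof.
rewrite /unitI /disk /= sqnormZ => /andP[s0 s1] hv.
have : 0 <= sqnorm v by apply: sumr_ge0 => i _; apply: sqr_ge0.
nra.
Qed.

Lemma scale_wcont n : wcont [set p : 'rV[R]_n * R | disk p.1 /\ unitI p.2]
  (fun p => p.2 *: p.1).
Proof.
apply: wcont_cont => p; apply: continuousZ.
  exact: snd_cont.
exact: fst_cont.
Qed.

End Disk.

Section CW.
Local Unset Implicit Arguments.
Variables (R : realType) (X : topologicalType) (k : nat) (dim : 'I_k -> nat)
  (Ph : forall i : 'I_k, 'rV[R]_(dim i) -> X).
Hypothesis hcont : forall i, wcont (@disk R (dim i)) (Ph i).
Hypothesis hcell : forall x : X, exists i, (Ph i @` @odisk R (dim i)) x.
Local Set Implicit Arguments.

Lemma CW_compact : compact (@setT X).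
Proof.
have -> : @setT X = \big[setU/set0]_(i <- enum 'I_k) (Ph i @` @disk R (dim i)).
  apply/seteqP; split => // x _.
  have [i [v hv <-]] := hcell x.
  apply: (@bigU_in _ _ _ _ i); first by rewrite mem_enum.
  by exists v => //; apply: ltW.
apply: bigsetU_compact => i _.
by apply: continuous_compact; [apply/wcontP; apply: hcont | apply: disk_compact].
Qed.

Definition radp i (v : 'rV[R]_(dim i)) : R -> X := fun s => Ph i (s *: v).

Lemma rad_famc i : famc (@disk R (dim i)) (fun v => radp v).
Proof.
have h := @wcont_comp _ _ _ _ _ (fun p : 'rV[R]_(dim i) * R => p.2 *: p.1) (Ph i)
  (@scale_wcont R (dim i)) (hcont i).
apply: h => -[v s] [/= dv Is]; exact: diskZ.
Qed.

Lemma rad_path i v : disk v -> wcont (@unitI R) (@radp i v).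
Proof. move=> dv; exact: (slice_s (rad_famc (i:=i)) dv). Qed.

Lemma radp0 i v : @radp i v 0 = Ph i 0.
Proof. by rewrite /radp scale0r. Qed.

Lemma radp1 i v : @radp i v 1 = Ph i v.
Proof. by rewrite /radp scale1r. Qed.

Lemma catp0 (al be : R -> X) : catp al be 0 = al 0.
Proof. by rewrite catpL ?mulr0 // invr_ge0. Qed.

Lemma catp1 (al be : R -> X) : al 1 = be 0 -> catp al be 1 = be 1.
Proof.
move=> e; rewrite catpR //; last by rewrite invf_le1 // ler1n.
by rewrite mulr1 (_ : 2 - 1 = 1) //; rewrite -addrA subrr addr0.
Qed.

Variable J : (R -> X) -> R.
Hypothesis hJcat : forall al be, wcont (@unitI R) al -> wcont (@unitI R) be ->
  al 1 = be 0 -> J (catp al be) = J al + J be.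
Hypothesis hJloop : forall l, wcont (@unitI R) l -> l 0 = l 1 -> J l = 0.
Hypothesis hJrad : forall i, exists C : R, forall v, disk v -> `|J (@radp i v)| <= C.

Lemma J_rev al : wcont (@unitI R) al -> J (revp al) = - J al.
Proof.
move=> ha.
have hr := revp_path ha.
have e : al 1 = revp al 0 by rewrite /revp subr0.
have := hJloop (catp_path ha hr e).
rewrite catp0 catp1 // /revp subrr => /(_ erefl).
rewrite hJcat // => h; lra.
Qed.

Lemma J_bound : exists C : R, forall g, wcont (@unitI R) g -> J g <= C.
Proof.
have /choice [Cr hCr] := hJrad.
pose c i := Ph i 0.
have /choice [pch hpch] : forall ij : 'I_k * 'I_k, exists p : R -> X,
    (exists q : R -> X, [/\ wcont (@unitI R) q, q 0 = c ij.2 & q 1 = c ij.1]) ->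
    [/\ wcont (@unitI R) p, p 0 = c ij.2 & p 1 = c ij.1].
  move=> ij; have [[q hq]|nq] := pselect (exists q : R -> X,
     [/\ wcont (@unitI R) q, q 0 = c ij.2 & q 1 = c ij.1]).
    by exists q.
  by exists (fun _ => c ij.1) => h; exfalso; apply: nq.
exists (2 * \sum_i `|Cr i| + \sum_ij `|J (pch ij)|) => g hg.
have [i [v dv gv]] := hcell (g 0).
have [j [u du gu]] := hcell (g 1).
have dv' : disk v by apply: ltW.
have du' : disk u by apply: ltW.
pose A1 := @radp i v.
pose A3 := revp (@radp j u).
have hA1 := rad_path dv'.
have hA3 := revp_path (rad_path du').
have e1 : A1 1 = g 0 by rewrite /A1 radp1.
have hb1 := catp_path hA1 hg e1.
have e2 : catp A1 g 1 = A3 0 by rewrite catp1 // /A3 /revp subr0 radp1.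
have hb := catp_path hb1 hA3 e2.
pose b := catp (catp A1 g) A3.
have b0 : b 0 = c i by rewrite /b !catp0 /A1 radp0.
have b1 : b 1 = c j by rewrite /b catp1 // /A3 /revp subrr radp0.
have [hp p0 p1] : [/\ wcont (@unitI R) (pch (i, j)), pch (i, j) 0 = c j & pch (i, j) 1 = c i].
  apply: hpch; exists (revp b); split => //.
  - exact: revp_path.
  - by rewrite /revp subr0 b1.
  - by rewrite /revp subrr b0.
have eL : b 1 = pch (i, j) 0 by rewrite b1 p0.
have L0 : catp b (pch (i, j)) 0 = catp b (pch (i, j)) 1.
  by rewrite catp0 catp1 // b0 p1.
have := hJloop (catp_path hb hp eL) L0.
rewrite hJcat // /b hJcat // hJcat // /A3 J_rev; last exact: rad_path.
move=> hsum.
have h1 := hCr i v dv'.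
have h2 := hCr j u du'.
have s1 : `|Cr i| <= \sum_i0 `|Cr i0|.
  by rewrite (bigD1 i) //= lerDl sumr_ge0.
have s2 : `|Cr j| <= \sum_i0 `|Cr i0|.
  by rewrite (bigD1 j) //= lerDl sumr_ge0.
have s3 : `|J (pch (i, j))| <= \sum_ij `|J (pch ij)|.
  by rewrite (bigD1 (i, j)) //= lerDl sumr_ge0.
have n1 := ler_norm (Cr i). have n2 := ler_norm (Cr j).
have n3 := ler_norm (- J (pch (i, j))).
rewrite normrN in n3.
have n4 : - J (@radp i v) <= `|J (@radp i v)| by rewrite -normrN ler_norm.
have n5 := ler_norm (J (@radp j u)).
move: hsum; rewrite /A1; lra.
Qed.

End CW.

Section Transfer.
Variable R : realType.

Lemma famc_pull (X Y : topologicalType) (D' : set X) (D : set Y) (a : X -> Y)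
  (H : Y -> R -> Y) (b : Y -> X) :
  continuous a -> continuous b -> famc D H -> (forall x, D' x -> D (a x)) ->
  famc D' (fun x s => b (H (a x) s)).
Proof.
move=> ca cb hH hD.
have g1 : wcont [set p : X * R | D' p.1 /\ unitI p.2] (fun p => (a p.1, p.2)).
  apply: wcont_pair; apply: wcont_cont; last exact: snd_cont.
  by move=> p; apply: continuous_comp; [apply: fst_cont | apply: ca].
have g2 := wcont_comp g1 hH.
have := wcont_comp (g2 _) (wcont_cont (A := setT) cb).
apply => //.
by move=> [x s] [/= h1 h2]; split => //=; apply: hD.
Qed.

Lemma famc_sub (X Y : topologicalType) (D D' : set X) (H : X -> R -> Y) :
  D' `<=` D -> famc D H -> famc D' H.
Proof.
move=> sub; apply: wcont_sub => -[x s] [/= h1 h2]; split => //; exact: sub.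
Qed.

Lemma homotopic_G (X : topologicalType) (f : X -> X) :
  homotopic R f id -> exists G : X -> R -> X,
    [/\ famc setT G, forall x, G x 0 = x & forall x, G x 1 = f x].
Proof.
move=> [H [hc h0 h1]].
exists (fun x s => H x (1 - s)); split.
- move/wcontP: hc => hc.
  have g1 : wcont [set p : X * R | setT p.1 /\ unitI p.2] (fun p => (p.1, 1 - p.2)).
    apply: wcont_pair; first by apply: wcont_cont; apply: fst_cont.
    move=> [x s] [_ Is] W nW.
    have [d d0 hd] := nbhsR_ex nW.
    apply: filterS (nbhs_prod_in (filterT : nbhs x setT) (@nbhsR_in _ s _ d d0 (fun y h => h))).
    move=> [x' s'] [_ /= hs'] _; apply: hd.
    have -> : 1 - s' - (1 - s) = - (s' - s) by ring.
    by rewrite normrN.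
  have := wcont_comp g1 hc; apply.
  move=> [x s] [_ /=]; rewrite /unitI /= => /andP[? ?]; apply/andP; split; lra.
- by move=> x; rewrite subr0.
- by move=> x; rewrite subrr.
Qed.

Variables (X Y : topologicalType) (wX : closed_form R X) (wY : closed_form R Y).

Lemma transfer (a : X -> Y) (b : Y -> X) (G : X -> R -> X) k :
  continuous a -> continuous b -> famc setT G -> (forall x, G x 0 = x) ->
  (forall x, G x 1 = b (a x)) -> compact (@setT X) ->
  (exists C : R, forall g, wcont (@unitI R) g ->
      path_integral wX (b \o g) <= path_integral wY g + C) ->
  cat_cover_prop wY k -> cat_cover_prop wX k.
Proof.
move=> ca cb hG G0 G1 cX [C hC] hY N N0.
have [C0 hC0] := track_bound wX cX hG.
pose N' := (Num.Def.archi_bound `|N%:R + C0 + C|).+1.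
have hN' : N%:R + C0 + C <= N'%:R.
  rewrite /N' -addn1 natrD.
  have := archi_boundP (normr_ge0 (N%:R + C0 + C)).
  have := ler_norm (N%:R + C0 + C); lra.
have [F [Fs [oF oFs cov hnull [h [hc h0 hint]]]]] := hY N' isT.
exists (a @^-1` F), (fun j => a @^-1` Fs j); split.
- by apply: open_comp => // x _; apply: ca.
- by move=> j; apply: open_comp => // x _; apply: ca.
- by move=> x; case: (cov (a x)) => [h1|[j h1]]; [left | right; exists j].
- move=> j; have [H [c [Hc H0 H1]]] := hnull j.
  have Hc' : famc (Fs j) H by rewrite /famc; apply/wcontP.
  exists (fun x => catp (G x) (fun s => b (H (a x) s))), (b c); split.
  + apply/wcontP; apply: (@catH_famc R X X (a @^-1` Fs j) G (fun x s => b (H (a x) s))).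
    * by apply: (famc_sub (fun _ _ => I) hG).
    * exact: (famc_pull ca cb Hc' (fun x hx => hx)).
    * by move=> x hx; rewrite G1 H0.
  + by move=> x _; rewrite catp0 G0.
  + by move=> x hx; rewrite catp1 ?H1 // G1 H0.
- have hc' : famc F h by rewrite /famc; apply/wcontP.
  exists (fun x => catp (G x) (fun s => b (h (a x) s))); split.
  + apply/wcontP; apply: (@catH_famc R X X (a @^-1` F) G (fun x s => b (h (a x) s))).
    * by apply: (famc_sub (fun _ _ => I) hG).
    * exact: (famc_pull ca cb hc' (fun x hx => hx)).
    * by move=> x hx; rewrite G1 h0.
  + by move=> x _; rewrite catp0 G0.
  + move=> x hx.
    have pG : wcont (@unitI R) (G x) by apply: (slice_s hG).
    have ph : wcont (@unitI R) (h (a x)) by apply: (slice_s hc').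
    have pbh : wcont (@unitI R) (fun s => b (h (a x) s)).
      by apply: (wcont_comp ph (wcont_cont (A := setT) cb)).
    rewrite path_integral_cat //; last by rewrite G1 h0.
    have e1 := hC0 x I.
    have e2 := hC (h (a x)) ph.
    have e3 := hint (a x) hx.
    have e4 := ler_norm (path_integral wX (G x)).
    move: e2; rewrite /comp => e2.
    lra.
Qed.

End Transfer.

Section Final.
Variable R : realType.

Lemma CW_data (X : topologicalType) : finite_CW_complex R X ->
  exists k (dim : 'I_k -> nat) (Ph : forall i : 'I_k, 'rV[R]_(dim i) -> X),
    (forall i, wcont (@disk R (dim i)) (Ph i)) /\
    (forall x : X, exists i, (Ph i @` @odisk R (dim i)) x).
Proof.
move=> [k [dim [Ph [_ [[hc _ _] [hp _ _]]]]]].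
exists k, dim, Ph; split.
  by move=> i; apply/wcontP; apply: hc.
by move=> x; have [i [h _]] := hp x; exists i.
Qed.

Lemma CW_compact' (X : topologicalType) : finite_CW_complex R X -> compact (@setT X).
Proof.
move=> /CW_data [k [dim [Ph [hc hp]]]].
exact: (@CW_compact R X k dim Ph hc hp).
Qed.

Lemma comp_catp (X Y : topologicalType) (f : X -> Y) (al be : R -> X) :
  f \o catp al be = catp (f \o al) (f \o be).
Proof. by apply: funext => s; rewrite /comp /catp; case: ifP. Qed.

Lemma bound_gen (X Y : topologicalType) (wX : closed_form R X) (wY : closed_form R Y)
  (f : X -> Y) : finite_CW_complex R X -> continuous f ->
  (forall l, wcont (@unitI R) l -> l 0 = l 1 ->
     path_integral wY (f \o l) = path_integral wX l) ->
  exists C : R, forall g, wcont (@unitI R) g ->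
     path_integral wY (f \o g) <= path_integral wX g + C.
Proof.
move=> /CW_data [k [dim [Ph [hc hp]]]] cf hloop.
have pf : forall g, wcont (@unitI R) g -> wcont (@unitI R) (f \o g).
  by move=> g hg; apply: (wcont_comp hg (wcont_cont (A := setT) cf)).
pose J := fun g => path_integral wY (f \o g) - path_integral wX g.
have hJcat : forall al be, wcont (@unitI R) al -> wcont (@unitI R) be ->
    al 1 = be 0 -> J (catp al be) = J al + J be.
  move=> al be ha hb e; rewrite /J.
  rewrite comp_catp !path_integral_cat //; first ring.
  + exact: pf.
  + exact: pf.
  + by rewrite /comp e.
have hJloop : forall l, wcont (@unitI R) l -> l 0 = l 1 -> J l = 0.
  by move=> l hl e; rewrite /J hloop // subrr.
have hJrad : forall i, exists C : R, forall v : 'rV[R]_(dim i), disk v -> `|J (radp Ph v)| <= C.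
  move=> i.
  have [M1 hM1] := track_bound wX (disk_compact (n:=dim i)) (@rad_famc _ _ _ _ _ hc i).
  have hf : famc (@disk R (dim i)) (fun v s => f (radp Ph v s)).
    apply: (wcont_comp (@rad_famc _ _ _ _ _ hc i) (wcont_cont (A := setT) cf)).
    by [].
  have [M2 hM2] := track_bound wY (disk_compact (n:=dim i)) hf.
  exists (M1 + M2) => v dv.
  apply: le_trans (ler_normB _ _) _.
  have := hM1 v dv; have := hM2 v dv; rewrite /comp; lra.
have [C hC] := J_bound hc hp hJcat hJloop hJrad.
by exists C => g hg; have := hC g hg; rewrite /J; lra.
Qed.

End Final.

Unset Implicit Arguments.
Local Close Scope classical_set_scope.

Theorem mainTheorem4 (R : realType) (X1 X2 : topologicalType)
  (CW1 : finite_CW_complex R X1) (CW2 : finite_CW_complex R X2)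
  (phi : X1 -> X2) (hphi : homotopy_equivalence R phi)
  (w1 : closed_form R X1) (w2 : closed_form R X2)
  (hpull : forall g : R -> X1, is_loop g ->
     path_integral w1 g = path_integral w2 (phi \o g)) :
  cat_xi w1 = cat_xi w2.
Proof.
have [cphi [psi [cpsi hpp hqq]]] := hphi.
have isl : forall (X : topologicalType) (l : R -> X), wcont (@unitI R) l -> l 0 = l 1 -> is_loop l.
  by move=> X l hl e; split => //; apply/wcontP.
have pc : forall (X Y : topologicalType) (f : X -> Y) g, continuous f ->
    wcont (@unitI R) g -> wcont (@unitI R) (f \o g).
  by move=> X Y f g cf hg; apply: (wcont_comp hg (wcont_cont (A := setT) cf)).
have dirB : forall k, cat_cover_prop w1 k -> cat_cover_prop w2 k.
  move=> k; have [G [hG G0 G1]] := homotopic_G hqq.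
  apply: (transfer (a := psi) (b := phi) cpsi cphi hG G0 G1 (CW_compact' CW2)).
  apply: (bound_gen (wX := w1) (wY := w2) CW1 cphi) => l hl e.
  by rewrite -hpull //; apply: isl.
have dirA : forall k, cat_cover_prop w2 k -> cat_cover_prop w1 k.
  move=> k; have [G [hG G0 G1]] := homotopic_G hpp.
  apply: (transfer (a := phi) (b := psi) cphi cpsi hG G0 G1 (CW_compact' CW1)).
  apply: (bound_gen (wX := w2) (wY := w1) CW2 cpsi) => l hl e.
  rewrite hpull; last by apply: isl; [apply: pc | rewrite /comp e].
  have [K [Kc K0 K1]] := hqq.
  pose S := fun t s => K (l s) t.
  have hS : famc (@unitI R) S.
    have g1 : wcont [set p : R * R | unitI p.1 /\ unitI p.2] (fun p => (l p.2, p.1)).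
      apply: wcont_pair.
        apply: (wcont_comp (wcont_cont (snd_cont (T:=R) (U:=R))) hl).
        by move=> p [].
      by apply: wcont_cont; apply: fst_cont.
    have := wcont_comp g1 (proj1 (wcontP _ _) Kc); apply.
    by move=> p [].
  have hloopS : forall t, unitI t -> S t 0 = S t 1 by move=> t It; rewrite /S e.
  have := HI w2 hS hloopS.
  have -> : S 0 = phi \o (psi \o l) by apply: funext => s; rewrite /S K0.
  have -> : S 1 = l by apply: funext => s; rewrite /S K1.
  done.
rewrite /cat_xi; congr xget; apply: funext => k; apply: propext; split.
  move=> [h1 h2]; split; first exact: dirB.
  by move=> m /dirA; apply: h2.
move=> [h1 h2]; split; first exact: dirA.
by move=> m /dirB; apply: h2.
Qed.
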